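(* Let $n$ be odd and let $0\le k,m\le n/2$. Let $N_n(k,m)$ be the number of reduced Latin squares of order $n$ of parity type $(k,m)$. Then the number of even reduced Latin squares of order $n$ of parity type $(k,m)$ equals $$\frac{km+(n-k)(n-m)}{n^2}N_n(k,m)\quad\text{if } k\equiv m \pmod 2,$$ and $$\frac{k(n-m)+m(n-k)}{n^2}N_n(k,m)\quad\text{if } k\not\equiv m \pmod 2.$$
   Context: A Latin square of order $n$ is an $n\times n$ array with entries in $[n]$, each symbol once in each row and column. Rows and columns are viewed as permutations: if symbol $i$ appears in the $j$th place of a row (column) $\sigma$, then $\sigma(i)=j$. $L$ is reduced if its first row and first column are the identity permutation. $\mathrm{par}(L)$ is the product of the signs of all rows and columns of $L$; $L$ is even if $\mathrm{par}(L)=1$. The parity type of $L$ is $(k,m)$, $0\le k,m\le n/2$, if $k$ of its rows have one sign and the other $n-k$ rows the opposite sign, and $m$ of its columns have one sign and the other $n-m$ columns the opposite sign. *)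

(* Defs.v *)
From mathcomp Require Import all_boot all_order all_algebra all_fingroup.
Set Implicit Arguments. Unset Strict Implicit. Unset Printing Implicit Defensive.

(* Squares of order n: rows, columns and symbols are all indexed by 'I_n
   (symbols 0..n-1 instead of 1..n). L i j is the symbol in row i, column j. *)
Definition square (n : nat) := 'M['I_n]_n.

Definition is_latin n (L : square n) : bool :=
  [forall i, injectiveb (fun j => L i j)] &&
  [forall j, injectiveb (fun i => L i j)].

Definition is_reduced n (L : square n) : bool :=
  [forall i, [forall j,
     ((nat_of_ord i == 0%N) ==> (L i j == j)) &&
     ((nat_of_ord j == 0%N) ==> (L i j == i))]].

(* row i viewed as the permutation s with s(symbol) = place; the row is odd
   iff this permutation is odd *)
Definition row_odd n (L : square n) (i : 'I_n) : bool :=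
  [exists s : 'S_n, [forall x, L i (s x) == x] && odd_perm s].
Definition col_odd n (L : square n) (j : 'I_n) : bool :=
  [exists s : 'S_n, [forall x, L (s x) j == x] && odd_perm s].

Definition n_odd_rows n (L : square n) : nat := #|[set i | row_odd L i]|.
Definition n_odd_cols n (L : square n) : nat := #|[set j | col_odd L j]|.

Definition is_even n (L : square n) : bool :=
  ~~ odd (n_odd_rows L + n_odd_cols L).

(* parity type (k,m): k rows of one sign, n-k of the other; likewise columns *)
Definition has_parity_type n (L : square n) (k m : nat) : bool :=
  ((n_odd_rows L == k) || (n_odd_rows L == n - k)) &&
  ((n_odd_cols L == m) || (n_odd_cols L == n - m)).

Definition N_count n (k m : nat) : nat :=
  #|[set L : square n | [&& is_latin L, is_reduced L & has_parity_type L k m]]|.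

Definition E_count n (k m : nat) : nat :=
  #|[set L : square n | [&& is_latin L, is_reduced L, has_parity_type L k m
                          & is_even L]]|.

(* Main.v *)
Require Import Defs.
Set Warnings "-notation-overridden,-ambiguous-paths".
From mathcomp Require Import all_boot all_order all_algebra all_fingroup.
From mathcomp Require Import zify.

Section S.
Variable n : nat.
Local Notation I := 'I_n.+1.
Local Notation sq := (square n.+1).
Local Notation S := {perm 'I_n.+1}.

Definition rowp (f : I -> I) : S :=
  match injectiveP f with ReflectT H => perm H | ReflectF _ => 1%g end.

Lemma rowpE f : injective f -> forall x, rowp f x = f x.
Proof. rewrite /rowp; case: injectiveP => // H _ x; by rewrite permE. Qed.

Lemma rowp_perm f (s : S) : f =1 s -> rowp f = s.
Proof.
move=> e; have inj : injective f by move=> x y; rewrite !e; exact: perm_inj.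
by apply/permP=> x; rewrite rowpE // e.
Qed.

Lemma latin_row (L : sq) i : is_latin L -> injective (fun j => L i j).
Proof. by case/andP => /forallP/(_ i)/injectiveP. Qed.
Lemma latin_col (L : sq) j : is_latin L -> injective (fun i => L i j).
Proof. by case/andP => _ /forallP/(_ j)/injectiveP. Qed.

Lemma row_oddE (L : sq) i : is_latin L -> row_odd L i = odd_perm (rowp (fun j => L i j)).
Proof.
move=> hL; have inj := latin_row L i hL.
apply/existsP/idP.
- case=> s /andP[/forallP hs os].
  suff -> : rowp (fun j => L i j) = s^-1%g by rewrite odd_permV.
  apply: rowp_perm => x. by have := eqP (hs (s^-1 x)%g); rewrite permKV.
- move=> h; exists (rowp (fun j => L i j))^-1%g; rewrite odd_permV h andbT.
  apply/forallP => x.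
  by rewrite -[X in _ == X](permKV (rowp (fun j => L i j)) x) rowpE.
Qed.

Lemma col_oddE (L : sq) j : is_latin L -> col_odd L j = odd_perm (rowp (fun i => L i j)).
Proof.
move=> hL; have inj := latin_col L j hL.
apply/existsP/idP.
- case=> s /andP[/forallP hs os].
  suff -> : rowp (fun i => L i j) = s^-1%g by rewrite odd_permV.
  apply: rowp_perm => x. by have := eqP (hs (s^-1 x)%g); rewrite permKV.
- move=> h; exists (rowp (fun i => L i j))^-1%g; rewrite odd_permV h andbT.
  apply/forallP => x.
  by rewrite -[X in _ == X](permKV (rowp (fun i => L i j)) x) rowpE.
Qed.

Definition iso (M : sq) (r p t : S) : sq := (\matrix_(i, j) p (M (r i) (t j)))%R.

Lemma iso_latin M r p t : is_latin M -> is_latin (iso M r p t).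
Proof.
move=> hM; apply/andP; split; apply/forallP => i; apply/injectiveP => x y;
  rewrite !mxE => /perm_inj.
- by move/(latin_row _ _ hM)/perm_inj.
- by move/(latin_col _ _ hM)/perm_inj.
Qed.

Lemma iso_row_odd M r p t i : is_latin M ->
  row_odd (iso M r p t) i = odd_perm t (+) row_odd M (r i) (+) odd_perm p.
Proof.
move=> hM; rewrite row_oddE ?iso_latin // row_oddE //.
have -> : rowp (fun j => iso M r p t i j) = (t * rowp (fun j => M (r i) j) * p)%g.
  by apply: rowp_perm => j; rewrite !permM mxE rowpE //; exact: latin_row.
by rewrite !odd_permM.
Qed.

Lemma iso_col_odd M r p t j : is_latin M ->
  col_odd (iso M r p t) j = odd_perm r (+) col_odd M (t j) (+) odd_perm p.
Proof.
move=> hM; rewrite col_oddE ?iso_latin // col_oddE //.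
have -> : rowp (fun i => iso M r p t i j) = (r * rowp (fun i => M i (t j)) * p)%g.
  by apply: rowp_perm => i; rewrite !permM mxE rowpE //; exact: latin_col.
by rewrite !odd_permM.
Qed.

Lemma reducedP (R : sq) :
  reflect ((forall j, R ord0 j = j) /\ (forall i, R i ord0 = i)) (is_reduced R).
Proof.
apply: (iffP forallP) => [h | [h1 h2] i].
  split=> [j | i].
    by have /forallP/(_ j)/andP[/implyP/(_ isT)/eqP] := h ord0.
  by have /forallP/(_ ord0)/andP[_ /implyP/(_ isT)/eqP] := h i.
apply/forallP => j; apply/andP; split; apply/implyP => /eqP h0.
  have -> : i = ord0 by apply/val_inj.
  by rewrite h1.
have -> : j = ord0 by apply/val_inj.
by rewrite h2.
Qed.

Lemma red_row0 (R : sq) : is_latin R -> is_reduced R -> row_odd R ord0 = false.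
Proof.
move=> hL /reducedP[h1 _]; rewrite row_oddE //.
by rewrite (@rowp_perm _ 1%g) ?odd_perm1 // => j; rewrite perm1 h1.
Qed.
Lemma red_col0 (R : sq) : is_latin R -> is_reduced R -> col_odd R ord0 = false.
Proof.
move=> hL /reducedP[_ h2]; rewrite col_oddE //.
by rewrite (@rowp_perm _ 1%g) ?odd_perm1 // => j; rewrite perm1 h2.
Qed.


Definition tau (b : I) : S := tperm ord0 b.
Definition pp (M : sq) (a b : I) : S := ((rowp (fun j => M a j))^-1 * tau b)%g.
Definition rr (M : sq) (a b : I) : S := ((rowp (fun i => M i b)) * pp M a b)^-1%g.
Definition red M a b := iso M (rr M a b) (pp M a b) (tau b).

Lemma tauK b x : tau b (tau b x) = x.
Proof. by rewrite /tau tpermK. Qed.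
Lemma tau0 b : tau b ord0 = b.
Proof. by rewrite /tau tpermL. Qed.
Lemma taub b : tau b b = ord0.
Proof. by rewrite /tau tpermR. Qed.

Lemma rr0 M a b : is_latin M -> rr M a b ord0 = a.
Proof.
move=> hM; rewrite /rr; apply: (canLR (permK _)).
rewrite permM /pp permM (rowpE _ (latin_col _ b hM)).
by rewrite -(rowpE _ (latin_row _ a hM) b) permK taub.
Qed.

Lemma red_reduced M a b : is_latin M -> is_reduced (red M a b).
Proof.
move=> hM; apply/reducedP; split=> [j|i]; rewrite /red mxE.
  by rewrite rr0 // /pp permM -(rowpE _ (latin_row _ a hM) (tau b j)) permK tauK.
by rewrite tau0 -(rowpE _ (latin_col _ b hM) (rr M a b i)) -!permM -mulgA /rr mulVg perm1.
Qed.

Lemma red_latin M a b : is_latin M -> is_latin (red M a b).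
Proof. exact: iso_latin. Qed.

Definition phi (x : sq * (S * (S * I))) : sq * (I * I) :=
  (iso x.1 (x.2.1^-1)%g (x.2.2.1^-1)%g (tau x.2.2.2), (x.2.1 ord0, x.2.2.2)).
Definition psi (y : sq * (I * I)) : sq * (S * (S * I)) :=
  (red y.1 y.2.1 y.2.2, (rr y.1 y.2.1 y.2.2, (pp y.1 y.2.1 y.2.2, y.2.2))).

Lemma psiK y : is_latin y.1 -> phi (psi y) = y.
Proof.
case: y => M [a b] /= hM; congr (_, (_, _)); last by rewrite rr0.
apply/matrixP => i j; rewrite /iso !mxE permK permKV tauK //.
Qed.

Lemma phiK x : is_latin x.1 -> is_reduced x.1 -> psi (phi x) = x.
Proof.
case: x => R [r [p b]] /= hL /reducedP[h1 h2].
set M := iso R r^-1 p^-1 (tau b).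
have hM : is_latin M by exact: iso_latin.
have epp : pp M (r ord0) b = p.
  rewrite /pp (@rowp_perm _ (tau b * p^-1)%g); last first.
    by move=> j; rewrite /M mxE permK h1 permM.
  by rewrite invMg invgK mulgKV.
have err : rr M (r ord0) b = r.
  rewrite /rr epp (@rowp_perm _ (r^-1 * p^-1)%g); last first.
    by move=> i; rewrite /M mxE taub h2 permM.
  by rewrite mulgKV invgK.
rewrite /psi /phi /= -/M epp err; congr (_, _).
apply/matrixP => i j; rewrite /red /iso !mxE epp err.
by rewrite permK permKV tauK.
Qed.

Definition Aset (P : pred sq) :=
  [set x : sq * (S * (S * I)) | [&& is_latin x.1, is_reduced x.1 & P x.1]].
Definition Bset (P : pred sq) :=
  [set y : sq * (I * I) | is_latin y.1 && P (red y.1 y.2.1 y.2.2)].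

Lemma card_AB P : #|Aset P| = #|Bset P|.
Proof.
have can1 : {in Aset P, cancel phi psi}.
  by move=> x; rewrite inE => /and3P[h1 h2 _]; exact: phiK.
have can2 : {in Bset P, cancel psi phi}.
  by move=> y; rewrite inE => /andP[h1 _]; exact: psiK.
have m1 : {in Aset P, forall x, phi x \in Bset P}.
  move=> x hx; have := can1 x hx; move: hx; rewrite !inE => /and3P[h1 h2 h3] e.
  rewrite iso_latin //=.
  by move/(congr1 fst): e => /= ->.
have m2 : {in Bset P, forall y, psi y \in Aset P}.
  move=> y; rewrite !inE => /andP[h1 h2] /=.
  by rewrite red_latin // red_reduced.
apply/eqP; rewrite eqn_leq; apply/andP; split.
  rewrite -(card_in_imset (can_in_inj can1)); apply: subset_leq_card.
  by apply/subsetP => _ /imsetP[x hx ->]; exact: m1.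
rewrite -(card_in_imset (can_in_inj can2)); apply: subset_leq_card.
by apply/subsetP => _ /imsetP[x hx ->]; exact: m2.
Qed.

Lemma card_A P : #|Aset P| =
  #|[set R : sq | [&& is_latin R, is_reduced R & P R]]| * (n.+1`! * (n.+1`! * n.+1)).
Proof.
have -> : Aset P = setX [set R : sq | [&& is_latin R, is_reduced R & P R]] [set: S * (S * I)].
  by apply/setP => -[R t]; rewrite !inE andbT.
by rewrite cardsX cardsT !card_prod !card_Sn !card_ord.
Qed.

Lemma card_sumb (T : finType) (Q : pred T) : #|[set x | Q x]| = \sum_x (Q x : nat).
Proof.
rewrite -sum1_card big_mkcond /=; apply: eq_bigr => x _; rewrite inE; by case: (Q x).
Qed.

Lemma sum_bool (T : finType) (p : pred T) (F : bool -> nat) :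
  \sum_(i : T) F (p i) = F true * #|[set i | p i]| + F false * (#|T| - #|[set i | p i]|).
Proof.
rewrite (bigID p) /=.
rewrite (eq_bigr (fun=> F true)); last by move=> i ->.
rewrite [X in _ + X](eq_bigr (fun=> F false)); last by move=> i /negbTE ->.
rewrite !sum_nat_cond_const.
have -> : #|[set x | ~~ p x]| = #|T| - #|[set i | p i]|.
  rewrite -(cardsC [set i | p i]) addKn; apply: eq_card => x; by rewrite !inE.
by rewrite mulnC [X in _ + X]mulnC.
Qed.

Lemma card_xor (s : S) (p : pred I) c :
  #|[set i | p (s i) (+) c]| = if c then n.+1 - #|[set i | p i]| else #|[set i | p i]|.
Proof.
have -> : #|[set i | p (s i) (+) c]| = #|[set i | p i (+) c]|.
  have -> : [set i | p i (+) c] = s @: [set i | p (s i) (+) c].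
    apply/setP => i; rewrite inE; apply/idP/imsetP => [h | [j]].
      by exists (s^-1 i)%g; rewrite ?inE permKV.
    by rewrite inE => h ->.
  by rewrite card_imset //; exact: perm_inj.
case: c.
  have := cardsC [set i | p i]; rewrite card_ord => e.
  rewrite -[X in X - _]e addKn.
  by apply: eq_card => x; rewrite !inE addbT.
by apply: eq_card => x; rewrite !inE addbF.
Qed.

Lemma red_rows M a b : is_latin M -> n_odd_rows (red M a b) =
  if row_odd M a then n.+1 - n_odd_rows M else n_odd_rows M.
Proof.
move=> hM.
have hr i : row_odd (red M a b) i = row_odd M (rr M a b i) (+) row_odd M a.
  have e0 := red_row0 _ (red_latin M a b hM) (red_reduced M a b hM).
  rewrite /red iso_row_odd // rr0 // in e0; rewrite /red iso_row_odd //.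
  move: e0; case: (row_odd M a); case: (odd_perm (tau b)); case: (odd_perm (pp M a b));
    by case: (row_odd M (rr M a b i)).
rewrite /n_odd_rows -(card_xor (rr M a b) (fun i => row_odd M i)).
by apply: eq_card => i; rewrite !inE hr.
Qed.

Lemma red_cols M a b : is_latin M -> n_odd_cols (red M a b) =
  if col_odd M b then n.+1 - n_odd_cols M else n_odd_cols M.
Proof.
move=> hM.
have hr j : col_odd (red M a b) j = col_odd M (tau b j) (+) col_odd M b.
  have e0 := red_col0 _ (red_latin M a b hM) (red_reduced M a b hM).
  rewrite /red iso_col_odd // tau0 in e0; rewrite /red iso_col_odd //.
  move: e0; case: (col_odd M b); case: (odd_perm (rr M a b)); case: (odd_perm (pp M a b));
    by case: (col_odd M (tau b j)).
rewrite /n_odd_cols -(card_xor (tau b) (fun i => col_odd M i)).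
by apply: eq_card => i; rewrite !inE hr.
Qed.


Lemma rows_le (M : sq) : n_odd_rows M <= n.+1.
Proof. by rewrite -[X in _ <= X](card_ord n.+1) max_card. Qed.
Lemma cols_le (M : sq) : n_odd_cols M <= n.+1.
Proof. by rewrite -[X in _ <= X](card_ord n.+1) max_card. Qed.

Lemma type_sym (c : bool) N K k : K <= N -> k <= N ->
  ((if c then N - K else K) == k) || ((if c then N - K else K) == N - k) =
  (K == k) || (K == N - k).
Proof.
move=> hK hk; case: c => //.
by apply/idP/idP => /orP[]/eqP h; apply/orP; [right|left|right|left]; apply/eqP; lia.
Qed.

Lemma type_red k m M a b : is_latin M -> k <= n.+1 -> m <= n.+1 ->
  has_parity_type (red M a b) k m = has_parity_type M k m.
Proof.
move=> hM hk hm; rewrite /has_parity_type red_rows // red_cols //.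
by rewrite !type_sym // ?rows_le ?cols_le.
Qed.

Lemma even_red M a b : is_latin M -> is_even (red M a b) =
  ~~ odd ((if row_odd M a then n.+1 - n_odd_rows M else n_odd_rows M) +
          (if col_odd M b then n.+1 - n_odd_cols M else n_odd_cols M)).
Proof. by move=> hM; rewrite /is_even red_rows // red_cols. Qed.

Lemma card_B P : #|Bset P| = \sum_M \sum_a \sum_b
   ((is_latin M && P (red M a b)) : nat).
Proof.
rewrite /Bset card_sumb.
rewrite -(pair_bigA _ (fun (M : sq) (ab : I * I) => ((is_latin M && P (red M ab.1 ab.2)) : nat))) /=.
apply: eq_bigr => M _.
by rewrite -(pair_bigA _ (fun a b => ((is_latin M && P (red M a b)) : nat))).
Qed.

Definition hh N K Mc (c d : bool) : nat :=
  ~~ odd ((if c then N - K else K) + (if d then N - Mc else Mc)).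
Definition Gf N K Mc (c : bool) := hh N K Mc c true * Mc + hh N K Mc c false * (N - Mc).


Lemma sumM_type k m (M : sq) : k <= n.+1 -> m <= n.+1 ->
  \sum_a \sum_b ((is_latin M && has_parity_type (red M a b) k m) : nat) =
  (is_latin M && has_parity_type M k m) * (n.+1 * n.+1).
Proof.
move=> hk hm; case hM: (is_latin M) => /=; last first.
  by rewrite mul0n big1 // => a _; rewrite big1.
transitivity (\sum_(a : I) \sum_(b : I) (has_parity_type M k m : nat)).
  by apply: eq_bigr => a _; apply: eq_bigr => b _; rewrite type_red.
by rewrite sum_nat_const card_ord sum_nat_const card_ord mulnA mulnC.
Qed.

Lemma sumM_even k m (M : sq) : k <= n.+1 -> m <= n.+1 ->
  \sum_a \sum_b ((is_latin M && (has_parity_type (red M a b) k m && is_even (red M a b))) : nat) =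
  (is_latin M && has_parity_type M k m) *
  (Gf n.+1 (n_odd_rows M) (n_odd_cols M) true * n_odd_rows M +
   Gf n.+1 (n_odd_rows M) (n_odd_cols M) false * (n.+1 - n_odd_rows M)).
Proof.
move=> hk hm; case hM: (is_latin M) => /=; last first.
  by rewrite mul0n big1 // => a _; rewrite big1.
case ht: (has_parity_type M k m) => /=; last first.
  by rewrite mul0n big1 // => a _; rewrite big1 // => b _; rewrite type_red // ht.
rewrite mul1n.
set K := n_odd_rows M; set Mc := n_odd_cols M.
transitivity (\sum_(a : I) \sum_(b : I) hh n.+1 K Mc (row_odd M a) (col_odd M b)).
  by apply: eq_bigr => a _; apply: eq_bigr => b _; rewrite type_red // ht even_red.
transitivity (\sum_(a : I) Gf n.+1 K Mc (row_odd M a)).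
  apply: eq_bigr => a _.
  by rewrite (sum_bool _ (col_odd M) (hh n.+1 K Mc (row_odd M a))) card_ord.
by rewrite (sum_bool _ (row_odd M) (Gf n.+1 K Mc)) card_ord.
Qed.

End S.

Lemma arith N k m K Mc : odd N -> k <= N -> m <= N ->
  (K == k) || (K == N - k) -> (Mc == m) || (Mc == N - m) ->
  Gf N K Mc true * K + Gf N K Mc false * (N - K) =
  if odd k == odd m then k * m + (N - k) * (N - m) else k * (N - m) + m * (N - k).
Proof.
move=> oN hk hm hK hM.
have [k' ek] : exists k', N = k + k' by exists (N - k); lia.
have [m' em] : exists m', N = m + m' by exists (N - m); lia.
have ok' : odd k' = ~~ odd k by move: oN; rewrite ek oddD; case: (odd k); case: (odd k').
have om' : odd m' = ~~ odd m by move: oN; rewrite em oddD; case: (odd m); case: (odd m').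
have e1 : N - k = k' by lia.
have e2 : N - m = m' by lia.
have e3 : N - k' = k by lia.
have e4 : N - m' = m by lia.
rewrite /Gf /hh e1 e2.
case/orP: hK => /eqP ->; case/orP: hM => /eqP ->; rewrite ?e1 ?e2 ?e3 ?e4 /= !oddD ?ok' ?om';
  case: (odd k); case: (odd m) => /=; lia.
Qed.

Lemma nat_main n k m : odd n.+1 -> k <= n.+1 -> m <= n.+1 ->
  E_count n.+1 k m * (n.+1 ^ 2) =
  (if odd k == odd m then k * m + (n.+1 - k) * (n.+1 - m)
   else k * (n.+1 - m) + m * (n.+1 - k)) * N_count n.+1 k m.
Proof.
move=> hn hk hm.
set C := (if odd k == odd m then _ else _).
set X := \sum_(M : square n.+1) ((is_latin M && has_parity_type M k m) : nat).
set c0 := (n.+1`! * (n.+1`! * n.+1)).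
have e1 : N_count n.+1 k m * c0 = X * (n.+1 * n.+1).
  have := @card_A n (fun R => has_parity_type R k m); rewrite /= => <-.
  rewrite card_AB card_B /X big_distrl /=.
  by apply: eq_bigr => M _; rewrite sumM_type.
have e2 : E_count n.+1 k m * c0 = X * C.
  have := @card_A n (fun R => has_parity_type R k m && is_even R); rewrite /= => <-.
  rewrite card_AB card_B /X big_distrl /=.
  apply: eq_bigr => M _; rewrite sumM_even //.
  case ht: (is_latin M && has_parity_type M k m) => //.
  case/andP: ht => _ /andP[t1 t2].
  by rewrite !mul1n /C (arith n.+1 k m).
have c0p : 0 < c0 by rewrite /c0 !muln_gt0 !fact_gt0.
apply/eqP; rewrite -(eqn_pmul2r c0p); apply/eqP.
rewrite mulnAC e2 -[RHS]mulnA e1; lia.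
Qed.

Import GRing.Theory Num.Theory.
Local Open Scope ring_scope.

Theorem corollary3p2 (n k m : nat) (hn : odd n)
  (hk : (2 * k <= n)%N) (hm : (2 * m <= n)%N) :
  (E_count n k m)%:R =
    (if odd k == odd m
     then ((k * m + (n - k) * (n - m))%:R / (n ^ 2)%:R) * (N_count n k m)%:R
     else ((k * (n - m) + m * (n - k))%:R / (n ^ 2)%:R) * (N_count n k m)%:R
    :> rat).
Proof.
case: n hn hk hm => [//|n] hn hk hm.
have hk' : (k <= n.+1)%N by lia.
have hm' : (m <= n.+1)%N by lia.
have e := nat_main n k m hn hk' hm'.
have nz : ((n.+1 ^ 2)%:R : rat) != 0 by rewrite pnatr_eq0 expn_eq0.
move: e; case: ifP => _ e; apply: (mulIf nz); rewrite mulrAC divfK // -!natrM;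
  exact: (congr1 (fun x : nat => x%:R) e).
Qed.
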